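(* Let $\Gamma\subseteq\mathbb R^n$ be an open convex set, $S\subseteq\Gamma$ a nonempty convex set, and $f:\Gamma\to\mathbb R$ a continuously differentiable function that is pseudoconvex on $\Gamma$. Let $\bar S=\arg\min\{f(x)\mid x\in S\}$ and $\bar x\in\bar S$. Define \[ \hat T_1:=\{x\in S\mid \nabla f(\bar x)^T(x-\bar x)=0,\ \exists\, p(x)>0:\ \nabla f(x)=p(x)\nabla f(\bar x)\}, \] \[ \hat T_2:=\{x\in S\mid \nabla f(\bar x)^T(x-\bar x)\le0,\ \exists\, p(x)>0:\ \nabla f(x)=p(x)\nabla f(\bar x)\}. \] Then $\bar S=\hat T_1=\hat T_2$.
   Context: A differentiable function $f$ on an open set $\Gamma$ is pseudoconvex on $\Gamma$ iff for all $x,y\in\Gamma$, $f(y)<f(x)$ implies $\nabla f(x)^T(y-x)<0$. *)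

(* Defs.v *)
From Stdlib Require Vectors.Fin.
From Stdlib Require Import Reals Lra.
Open Scope R_scope.

Definition Vec (n : nat) : Type := Fin.t n -> R.

Fixpoint dot (n : nat) : Vec n -> Vec n -> R :=
  match n with
  | O => fun _ _ => 0
  | Datatypes.S m => fun u v =>
      u Fin.F1 * v Fin.F1 + dot m (fun i => u (Fin.FS i)) (fun i => v (Fin.FS i))
  end.
Arguments dot {n} _ _.

Definition vsub {n} (u v : Vec n) : Vec n := fun i => u i - v i.
Definition vadd {n} (u v : Vec n) : Vec n := fun i => u i + v i.
Definition vscal {n} (a : R) (u : Vec n) : Vec n := fun i => a * u i.

Definition vnorm {n} (u : Vec n) : R := sqrt (dot u u).

Definition is_open {n} (G : Vec n -> Prop) : Prop :=
  forall x, G x -> exists r, 0 < r /\ forall y, vnorm (vsub y x) < r -> G y.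

Definition is_convex {n} (G : Vec n -> Prop) : Prop :=
  forall x y t, G x -> G y -> 0 <= t <= 1 -> G (vadd x (vscal t (vsub y x))).

Definition has_gradient {n} (f : Vec n -> R) (g : Vec n) (x : Vec n) : Prop :=
  forall eps, 0 < eps -> exists delta, 0 < delta /\
    forall y, vnorm (vsub y x) < delta ->
      Rabs (f y - f x - dot g (vsub y x)) <= eps * vnorm (vsub y x).

Definition C1_on {n} (G : Vec n -> Prop) (f : Vec n -> R) (df : Vec n -> Vec n) : Prop :=
  (forall x, G x -> has_gradient f (df x) x) /\
  (forall x, G x -> forall eps, 0 < eps -> exists delta, 0 < delta /\
     forall y, G y -> vnorm (vsub y x) < delta -> vnorm (vsub (df y) (df x)) < eps).

Definition pseudoconvex_on {n} (G : Vec n -> Prop) (f : Vec n -> R) (df : Vec n -> Vec n) : Prop :=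
  forall x y, G x -> G y -> f y < f x -> dot (df x) (vsub y x) < 0.

Definition argmin_on {n} (f : Vec n -> R) (S : Vec n -> Prop) (x : Vec n) : Prop :=
  S x /\ forall y, S y -> f x <= f y.

Definition T1hat {n} (f : Vec n -> R) (df : Vec n -> Vec n) (S : Vec n -> Prop) (xbar x : Vec n) : Prop :=
  S x /\ dot (df xbar) (vsub x xbar) = 0 /\
  exists p, 0 < p /\ df x = vscal p (df xbar).

Definition T2hat {n} (f : Vec n -> R) (df : Vec n -> Vec n) (S : Vec n -> Prop) (xbar x : Vec n) : Prop :=
  S x /\ dot (df xbar) (vsub x xbar) <= 0 /\
  exists p, 0 < p /\ df x = vscal p (df xbar).

(* Main.v *)
Require Import Defs.
From Stdlib Require Import Reals.
From Stdlib Require Import Lra Psatz FunctionalExtensionality.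
Open Scope R_scope.

Lemma dot_comm : forall n (u v : Vec n), dot u v = dot v u.
Proof. induction n; simpl; intros; [reflexivity| rewrite IHn; ring]. Qed.
Arguments dot_comm {n}.

Lemma dot_addl : forall n (u v w : Vec n), dot (vadd u v) w = dot u w + dot v w.
Proof.
  induction n; simpl; intros. ring.
  specialize (IHn (fun i => u (Fin.FS i)) (fun i => v (Fin.FS i)) (fun i => w (Fin.FS i))).
  unfold vadd in *; simpl in *. rewrite IHn. ring.
Qed.

Lemma dot_subl : forall n (u v w : Vec n), dot (vsub u v) w = dot u w - dot v w.
Proof.
  induction n; simpl; intros. ring.
  specialize (IHn (fun i => u (Fin.FS i)) (fun i => v (Fin.FS i)) (fun i => w (Fin.FS i))).
  unfold vsub in *; simpl in *. rewrite IHn. ring.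
Qed.

Lemma dot_scall : forall n a (u w : Vec n), dot (vscal a u) w = a * dot u w.
Proof.
  induction n; simpl; intros. ring.
  specialize (IHn a (fun i => u (Fin.FS i)) (fun i => w (Fin.FS i))).
  unfold vscal in *; simpl in *. rewrite IHn. ring.
Qed.

Lemma dot_scalr : forall n a (u w : Vec n), dot w (vscal a u) = a * dot w u.
Proof. intros. rewrite dot_comm, dot_scall, dot_comm. reflexivity. Qed.

Lemma dot_ge0 : forall n (u : Vec n), 0 <= dot u u.
Proof.
  induction n; simpl; intros. lra.
  specialize (IHn (fun i => u (Fin.FS i))). nra.
Qed.

Lemma dot_0r : forall n (u : Vec n), dot u (fun _ => 0) = 0.
Proof. induction n; simpl; intros. ring. rewrite IHn. ring. Qed.

Lemma dot_eq0 : forall n (u : Vec n), dot u u = 0 -> forall i, u i = 0.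
Proof.
  induction n; simpl; intros u H i.
  - apply (Fin.case0 (fun _ => u i = 0) i).
  - pose proof (dot_ge0 _ (fun i => u (Fin.FS i))).
    assert (h1 : u Fin.F1 = 0) by nra.
    assert (h2 : dot (fun i => u (Fin.FS i)) (fun i => u (Fin.FS i)) = 0) by nra.
    apply (Fin.caseS' i). exact h1. intro j. apply (IHn _ h2 j).
Qed.

Lemma dot_eq0_vec : forall n (u : Vec n), dot u u = 0 -> u = (fun _ => 0).
Proof. intros. apply functional_extensionality. apply dot_eq0; auto. Qed.

Lemma vnorm_scal : forall n t (d : Vec n), 0 <= t -> vnorm (vscal t d) = t * vnorm d.
Proof.
  intros. unfold vnorm. rewrite dot_scall, dot_scalr.
  replace (t * (t * dot d d)) with ((t*t) * dot d d) by ring.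
  rewrite sqrt_mult by (nra || apply dot_ge0). rewrite sqrt_square; auto.
Qed.

Lemma vsub_step : forall n (x d : Vec n) t, vsub (vadd x (vscal t d)) x = vscal t d.
Proof. intros. apply functional_extensionality; intro i. unfold vsub, vadd, vscal. ring. Qed.

Lemma descent : forall n (f : Vec n -> R) a x d, has_gradient f a x -> dot a d < 0 ->
  forall T, 0 < T -> exists t, 0 < t /\ t < T /\ t * vnorm d < T /\
    f (vadd x (vscal t d)) < f x.
Proof.
  intros n f a x d Hg Had T HT.
  assert (Hdd : 0 < dot d d).
  { destruct (dot_ge0 _ d) as [h|h]; auto.
    symmetry in h. apply dot_eq0_vec in h. rewrite h, dot_0r in Had. lra. }
  assert (HN : 0 < vnorm d) by (unfold vnorm; apply sqrt_lt_R0; auto).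
  set (N := vnorm d) in *.
  destruct (Hg (- dot a d / (2 * N))) as [delta [Hdel Hy]].
  { apply Rdiv_lt_0_compat; lra. }
  set (t := Rmin T (Rmin (T / N) (delta / N)) / 2).
  assert (Ht1 : 0 < Rmin T (Rmin (T / N) (delta / N))).
  { repeat apply Rmin_pos; auto; apply Rdiv_lt_0_compat; auto. }
  assert (Hm1 : Rmin T (Rmin (T / N) (delta / N)) <= T) by apply Rmin_l.
  assert (Hm2 : Rmin T (Rmin (T / N) (delta / N)) <= T / N)
    by (eapply Rle_trans; [apply Rmin_r| apply Rmin_l]).
  assert (Hm3 : Rmin T (Rmin (T / N) (delta / N)) <= delta / N)
    by (eapply Rle_trans; [apply Rmin_r| apply Rmin_r]).
  assert (tN1 : t * N < T).
  { unfold t. apply Rmult_le_compat_r with (r := N) in Hm2; [|lra].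
    unfold Rdiv in Hm2. rewrite Rmult_assoc, Rinv_l in Hm2 by lra. lra. }
  assert (tN2 : t * N < delta).
  { unfold t. apply Rmult_le_compat_r with (r := N) in Hm3; [|lra].
    unfold Rdiv in Hm3. rewrite Rmult_assoc, Rinv_l in Hm3 by lra. lra. }
  exists t. split; [unfold t; lra|]. split; [unfold t; lra|]. split; [auto|].
  assert (Hv : vnorm (vsub (vadd x (vscal t d)) x) = t * N).
  { rewrite vsub_step. apply vnorm_scal. unfold t; lra. }
  specialize (Hy (vadd x (vscal t d))). rewrite Hv in Hy.
  specialize (Hy tN2). rewrite vsub_step, dot_scalr in Hy.
  pose proof (Rle_abs (f (vadd x (vscal t d)) - f x - t * dot a d)) as Hab.
  assert (E : - dot a d / (2 * N) * (t * N) = - t * dot a d / 2) by (field; lra).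
  rewrite E in Hy. assert (0 < t) by (unfold t; lra). nra.
Qed.

Lemma first_order : forall n (S : Vec n -> Prop) f (b z x : Vec n), is_convex S ->
  argmin_on f S z -> has_gradient f b z -> S x -> 0 <= dot b (vsub x z).
Proof.
  intros n S f b z x HS [Hz Hmin] Hg Hx.
  destruct (Rle_or_lt 0 (dot b (vsub x z))) as [h|h]; auto.
  destruct (descent n f b z (vsub x z) Hg h 1 Rlt_0_1) as [t [t0 [t1 [_ Hf]]]].
  assert (S (vadd z (vscal t (vsub x z)))) by (apply HS; auto; lra).
  specialize (Hmin _ H). lra.
Qed.

Lemma global_min_grad0 : forall n (G : Vec n -> Prop) f (b z : Vec n), is_open G ->
  G z -> has_gradient f b z -> (forall y, G y -> f z <= f y) -> b = (fun _ => 0).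
Proof.
  intros n G f b z HG Hz Hg Hmin.
  destruct (dot_ge0 _ b) as [h|h]; [|apply dot_eq0_vec; auto].
  exfalso.
  assert (Hd : dot b (vscal (-1) b) < 0) by (rewrite dot_scalr; lra).
  destruct (HG z Hz) as [r [Hr HrG]].
  destruct (descent n f b z _ Hg Hd r Hr) as [t [t0 [t1 [t2 Hf]]]].
  assert (G (vadd z (vscal t (vscal (-1) b)))).
  { apply HrG. rewrite vsub_step, vnorm_scal by lra. auto. }
  specialize (Hmin _ H). lra.
Qed.

Theorem corollary1 (n : nat) (G Sset : Vec n -> Prop) (f : Vec n -> R) (df : Vec n -> Vec n)
  (HGopen : is_open G) (HGconv : is_convex G)
  (HSsub : forall x, Sset x -> G x) (HSne : exists x, Sset x) (HSconv : is_convex Sset)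
  (Hf : C1_on G f df) (Hpc : pseudoconvex_on G f df)
  (xbar : Vec n) (Hxbar : argmin_on f Sset xbar) :
  (forall x, argmin_on f Sset x <-> T1hat f df Sset xbar x) /\
  (forall x, argmin_on f Sset x <-> T2hat f df Sset xbar x).
Proof.
  destruct Hf as [Hgr _].
  assert (Gxb : G xbar) by (apply HSsub, Hxbar).
  assert (T2A : forall x, T2hat f df Sset xbar x -> argmin_on f Sset x).
  { intros x [Sx [Hle [p [Hp Hdf]]]]. split; auto. intros y Sy.
    apply Rle_trans with (f xbar); [|apply Hxbar; auto].
    destruct (Rle_or_lt (f x) (f xbar)) as [h|h]; auto. exfalso.
    specialize (Hpc x xbar (HSsub x Sx) Gxb h). rewrite Hdf, dot_scall in Hpc.
    assert (E : vsub xbar x = vscal (-1) (vsub x xbar))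
      by (apply functional_extensionality; intro i; unfold vsub, vscal; ring).
    rewrite E, dot_scalr in Hpc. nra. }
  assert (AT1 : forall x, argmin_on f Sset x -> T1hat f df Sset xbar x).
  { intros x Hx. pose proof Hx as [Sx Hxm]. pose proof Hxbar as [Sxb Hxbm].
    assert (Gx : G x) by auto.
    assert (Heq : f x = f xbar) by (specialize (Hxm _ Sxb); specialize (Hxbm _ Sx); lra).
    set (a := df x) in *. set (b := df xbar) in *.
    assert (E1 : 0 <= dot b (vsub x xbar)) by (eapply first_order; eauto).
    assert (E2 : 0 <= dot a (vsub xbar x)) by (eapply first_order; eauto).
    assert (Eneg : vsub xbar x = vscal (-1) (vsub x xbar))
      by (apply functional_extensionality; intro i; unfold vsub, vscal; ring).
    assert (Hprop : exists p, 0 < p /\ a = vscal p b).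
    { destruct (dot_ge0 _ b) as [hb|hb].
      -
        assert (K : forall d, 0 < dot b d -> 0 <= dot a d).
        { intros d hbd. destruct (Rle_or_lt 0 (dot a d)) as [h|h]; auto. exfalso.
          destruct (HGopen x Gx) as [r [Hr HrG]].
          destruct (descent n f a x d (Hgr x Gx) h r Hr) as [t [t0 [t1 [t2 Hfd]]]].
          assert (Gy : G (vadd x (vscal t d))).
          { apply HrG. rewrite vsub_step, vnorm_scal by lra. auto. }
          rewrite Heq in Hfd.
          specialize (Hpc xbar _ Gxb Gy Hfd). fold b in Hpc.
          assert (E : vsub (vadd x (vscal t d)) xbar = vadd (vsub x xbar) (vscal t d))
            by (apply functional_extensionality; intro i; unfold vsub, vadd, vscal; ring).
          rewrite E, dot_comm, dot_addl, dot_scall, (dot_comm (vsub x xbar) b), (dot_comm d b) in Hpc.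
          nra. }
        set (p := dot a b / dot b b).
        set (c := vsub a (vscal p b)).
        assert (Hbc : dot b c = 0).
        { unfold c. rewrite dot_comm, dot_subl, dot_scall.
          unfold p. field. lra. }
        assert (Hac : dot a c = dot c c).
        { unfold c at 2. rewrite dot_subl, dot_scall. fold c. rewrite Hbc. ring. }
        assert (Hcc : dot c c = 0).
        { destruct (dot_ge0 _ c) as [hc|hc]; auto. exfalso.
          set (e := dot c c / (Rabs (dot a b) + 1)).
          assert (He : 0 < e) by (unfold e; apply Rdiv_lt_0_compat; [lra| pose proof (Rabs_pos (dot a b)); lra]).
          assert (Hea : e * Rabs (dot a b) < dot c c).
          { unfold e. apply Rmult_lt_reg_r with (Rabs (dot a b) + 1).
            pose proof (Rabs_pos (dot a b)); lra.
            field_simplify; [|pose proof (Rabs_pos (dot a b)); lra].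
            nra. }
          specialize (K (vadd (vscal (-1) c) (vscal e b))).
          rewrite !(dot_comm _ (vadd _ _)), !dot_addl, !dot_scall in K.
          rewrite (dot_comm c b), Hbc, (dot_comm c a), Hac, (dot_comm b a) in K.
          pose proof (Rle_abs (dot a b)).
          assert (0 < -1 * 0 + e * dot b b) by nra. specialize (K H0). nra. }
        pose proof (dot_eq0 _ c Hcc) as Hcc0.
        assert (Ha : a = vscal p b).
        { apply functional_extensionality; intro i. specialize (Hcc0 i).
          unfold c, vsub, vscal in *. lra. }
        exists p. split; auto.
        assert (Hab : 0 <= dot a b) by (apply K; auto).
        destruct (Rle_lt_or_eq_dec 0 p) as [hp|hp]; auto.
        { unfold p. apply Rmult_le_pos; auto. left; apply Rinv_0_lt_compat; auto. }
        exfalso.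
        assert (Ha0 : a = fun _ => 0).
        { rewrite Ha, <- hp. apply functional_extensionality; intro; unfold vscal; ring. }
        assert (Gmin : forall y, G y -> f xbar <= f y).
        { intros y Gy. rewrite <- Heq. destruct (Rle_or_lt (f x) (f y)) as [h|h]; auto.
          specialize (Hpc x y Gx Gy h). fold a in Hpc. rewrite Ha0, dot_comm, dot_0r in Hpc. lra. }
        pose proof (global_min_grad0 n G f b xbar HGopen Gxb (Hgr _ Gxb) Gmin) as Hb0.
        rewrite Hb0, dot_0r in hb. lra.
      - symmetry in hb. apply dot_eq0_vec in hb.
        assert (Gmin : forall y, G y -> f x <= f y).
        { intros y Gy. rewrite Heq. destruct (Rle_or_lt (f xbar) (f y)) as [h|h]; auto.
          specialize (Hpc xbar y Gxb Gy h). fold b in Hpc. rewrite hb, dot_comm, dot_0r in Hpc. lra. }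
        pose proof (global_min_grad0 n G f a x HGopen Gx (Hgr _ Gx) Gmin) as Ha0.
        exists 1. split; [lra|]. rewrite Ha0, hb.
        apply functional_extensionality; intro; unfold vscal; ring. }
    destruct Hprop as [p [Hp Ha]].
    split; auto. split; [|exists p; auto].
    rewrite Ha, dot_scall, Eneg, dot_scalr in E2. apply Rle_antisym; [|auto]. destruct (Rle_or_lt (dot b (vsub x xbar)) 0) as [h|h]; auto. nra. }
  split; intro x; split; auto.
  - intros [Sx [H0 Hp]]. apply T2A. split; auto. split; auto. lra.
  - intro H. destruct (AT1 x H) as [Sx [H0 Hp]]. split; auto. split; auto. lra.
Qed.
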